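(* In the noiseless discrete channel setting described in the context, with $(\theta,Y^n,X^n)$ generated by the model and $P_n,Q_n$ as defined there, $$I(\theta;Y^n\mid X^n)=nH(Y)-D(P_n\,\|\,Q_n),$$ and therefore, as $N\to\infty$, $$\left(1-\frac{H(\theta\mid Y^n,X^n)}{H(\theta)}\right)+\frac{D(P_n\,\|\,Q_n)}{H(\theta)}=(1+o(1))\frac{n}{n^*}.$$
   Context: Setting. For each $N\in\mathbb N$: $\Theta=\Theta_N$ is a finite subset of the unit sphere of $\mathbb R^N$ of cardinality $M=M_N$, with $M_N\to\infty$ and $\langle\theta,\theta'\rangle\ge 0$ for all $\theta,\theta'\in\Theta$; $P_\Theta$ is the uniform distribution on $\Theta$; $\mathcal D=\mathcal D_N$ is a distribution on $\mathbb R^{L}$; $g=g_N:\mathbb R^L\times\mathbb R^N\to\mathcal Y$ with $\mathcal Y$ finite of cardinality independent of $N$. One draws $\theta\sim P_\Theta$, independently $X_1,\dots,X_n$ i.i.d. from $\mathcal D$ ($n=n_N$), and sets $Y_i=g(X_i,\theta)$; $Y^n=(Y_i)_{i\le n}$, $X^n=(X_i)_{i\le n}$. $H$ denotes Shannon entropy, $I$ mutual information, $D$ Kullback–Leibler divergence (natural log). $Y$ denotes $g(X,\theta)$ with $X\sim\mathcal D$, $\theta\sim P_\Theta$ independent; $n^*=\lfloor H(\theta)/H(Y)\rfloor$. $P_n$ is the law of $(Y^n,X^n)$ under the model. $Q_n$ is the ''null'' law of $(Y^n,X^n)$ under which $X_1,\dots,X_n$ are i.i.d. from $\mathcal D$ and,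 independently of $X^n$, $Y_1,\dots,Y_n$ are i.i.d. with the law of $Y$. *)

(* Defs.v *)
From HB Require Import structures.
From mathcomp Require Import all_boot all_order all_algebra.
From mathcomp Require Import all_classical all_reals all_analysis.
Set Implicit Arguments. Unset Strict Implicit. Unset Printing Implicit Defensive.
Import Order.TTheory GRing.Theory Num.Theory.
Local Open Scope classical_set_scope.
Local Open Scope ring_scope.

Definition inner (R : realType) (K : nat) (u v : K.-tuple R) : R :=
  \sum_(i < K) tnth u i * tnth v i.

Section Model.
Variables (d : measure_display) (T : measurableType d) (R : realType).
Variable (P : probability T R).
Variables (Th : eqType) (Theta : seq Th).
Variables (Yt : finType) (g : T -> Th -> Yt).

Definition Msz : nat := size Theta.

(* E_{X^n ~ P^n}[f(X^n)] for i.i.d. X_1..X_n, as an iterated integral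
   (for nonnegative measurable f this is the integral against P^{(x) n}). *)
Fixpoint iint (n : nat) : (n.-tuple T -> \bar R) -> \bar R :=
  match n return (n.-tuple T -> \bar R) -> \bar R with
  | 0 => fun f => f [tuple]
  | n'.+1 => fun f => (\int[P]_x iint (fun s : n'.-tuple T => f (cons_tuple x s)))%E
  end.

(* joint pmf of (theta, Y^n) given X^n = xs, at theta = t in Theta
   (theta uniform on Theta, Y_i = g(X_i, theta)). *)
Definition pjoint n (xs : n.-tuple T) (t : Th) (y : n.-tuple Yt) : R :=
  (Msz%:R)^-1 * (val y == map (g ^~ t) xs)%:R.

(* conditional pmf of Y^n given X^n = xs, i.e. density of P_n w.r.t.
   (counting on Y^n) (x) D^n. *)
Definition pYgivenX n (xs : n.-tuple T) (y : n.-tuple Yt) : R :=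
  \sum_(t <- Theta) pjoint xs t y.

Definition MI_at n (xs : n.-tuple T) : R :=
  \sum_(t <- Theta) \sum_(y : n.-tuple Yt)
     pjoint xs t y * ln (pjoint xs t y / ((Msz%:R)^-1 * pYgivenX xs y)).

Definition Hcond_at n (xs : n.-tuple T) : R :=
  \sum_(t <- Theta) \sum_(y : n.-tuple Yt)
     pjoint xs t y * ln (pYgivenX xs y / pjoint xs t y).

Definition condMI n : \bar R := iint (fun xs : n.-tuple T => (MI_at xs)%:E).

Definition condH n : \bar R := iint (fun xs : n.-tuple T => (Hcond_at xs)%:E).

Definition Htheta : R :=
  - \sum_(t <- Theta) (Msz%:R)^-1 * ln ((Msz%:R)^-1).

(* law of Y = g(X, theta), X ~ D, theta ~ Unif(Theta) independent *)
Definition pY (y : Yt) : R :=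
  \sum_(t <- Theta) (Msz%:R)^-1 * fine (P [set x | g x t = y]).

Definition HY : R := - \sum_(y : Yt) pY y * ln (pY y).

Definition nstar : int := Num.floor (Htheta / HY).

Definition klterm (p q : R) : \bar R :=
  if p == 0 then 0%E else if q == 0 then +oo%E else (p * ln (p / q))%:E.

(* D(P_n || Q_n), where P_n has density pYgivenX xs y and Q_n has density
   prod_i pY (y_i) w.r.t. the common dominating measure (counting on Y^n) (x) D^n. *)
Definition KLn n : \bar R :=
  iint (fun xs : n.-tuple T =>
    (\sum_(y : n.-tuple Yt) klterm (pYgivenX xs y) (\prod_(i < n) pY (tnth y i)))%E).

End Model.

(* Main.v *)
Set Warnings "-all".
Require Import Defs.
From HB Require Import structures.
From mathcomp Require Import all_boot all_order all_algebra.
From mathcomp Require Import all_classical all_reals all_analysis.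
From mathcomp Require Import measurable_realfun.
From mathcomp Require Import ring lra.
Set Implicit Arguments. Unset Strict Implicit. Unset Printing Implicit Defensive.
Import Order.TTheory GRing.Theory Num.Theory.
Local Open Scope classical_set_scope.
Local Open Scope ring_scope.
Section ereal_helpers.
Local Open Scope ereal_scope.
Context (R : realType).

Lemma adde_nNy (x y : \bar R) : x != -oo -> y != -oo -> x + y != -oo.
Proof. by case: x => [x| |] //; case: y => [y| |]. Qed.

Lemma mulEc_nNy (x : \bar R) (c : R) : (0 <= c)%R -> x != -oo -> x * c%:E != -oo.
Proof.
move=> c0; case: x => [x| |] // _.
have [->|cn0] := eqVneq c 0%R; first by rewrite mule0.
rewrite gt0_mulye//; rewrite lte_fin lt0r cn0 c0 //.
Qed.

Lemma sum_nNy (I : Type) (s : seq I) (X : I -> \bar R) :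
  (forall i, X i != -oo) -> \sum_(i <- s) X i != -oo.
Proof. by move=> H; elim/big_ind: _ => // x y; exact: adde_nNy. Qed.

Lemma sume_distrl_c (I : Type) (s : seq I) (X : I -> \bar R) (c : R) :
  (forall i, X i != -oo) ->
  (\sum_(i <- s) X i) * c%:E = \sum_(i <- s) X i * c%:E.
Proof.
move=> H; elim: s => [|h t ih]; first by rewrite !big_nil mul0e.
rewrite !big_cons muleDl// ?ih//.
have := sum_nNy t H; have := H h.
by case: (X h) => [x| |]; case: (\sum_(j <- t) X j) => [y| |].
Qed.
End ereal_helpers.

Lemma sum_tuple_cons (V : Type) (idx : V) (op : Monoid.com_law idx) (S : finType) n
  (F : n.+1.-tuple S -> V) :
  \big[op/idx]_(pi : n.+1.-tuple S) F pi =
  \big[op/idx]_(a : S) \big[op/idx]_(pi : n.-tuple S) F [tuple of a :: pi].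
Proof.
rewrite pair_big /=.
rewrite (reindex (fun p : S * n.-tuple S => [tuple of p.1 :: p.2])) //=.
exists (fun pi : n.+1.-tuple S => (thead pi, [tuple of behead pi])).
- by move=> [a p] _ /=; rewrite theadE; congr pair; apply: val_inj.
- by move=> pi _; rewrite [in RHS](tuple_eta pi).
Qed.
Section bigsetU_gen.
Local Open Scope ereal_scope.
Context d (T : measurableType d) (R : realType) (mu : {measure set T -> \bar R}).

Lemma integral_bigsetU_gen (I : eqType) (F : I -> set T) (f : T -> \bar R)
    (s : seq I) :
  (forall i, d.-measurable (F i)) ->
  uniq s -> trivIset [set` s] F ->
  let D := \big[setU/set0]_(i <- s) F i in
  measurable_fun D f ->
  \int[mu]_(x in D) f x = \sum_(i <- s) \int[mu]_(x in F i) f x.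
Proof.
move=> mF; elim: s => [|h t ih] us tF D mf.
  by rewrite /D 2!big_nil integral_set0.
rewrite /D big_cons integral_setU//.
- rewrite big_cons ih//.
  + by move: us => /= /andP[].
  + by apply: sub_trivIset tF => /= i /= it; rewrite inE it orbT.
  + apply: measurable_funS mf => //; first exact: bigsetU_measurable.
    by rewrite /D big_cons; exact: subsetUr.
- exact: bigsetU_measurable.
- by move: mf; rewrite /D big_cons.
- apply/eqP; rewrite big_distrr/= big_seq big1// => i it.
  move/trivIsetP : tF; apply => //=; rewrite ?mem_head//.
  + by rewrite inE it orbT.
  + by apply/eqP => hi; move: us => /=; rewrite hi it.
Qed.
End bigsetU_gen.

Section Pat.
Context d (T : measurableType d) (R : realType) (P : probability T R)
  (Th : eqType) (Theta : seq Th) (Yt : finType) (g : T -> Th -> Yt).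
Hypothesis mg : forall t, t \in Theta -> forall y, measurable [set x | g x t = y].
Local Notation M := (Msz Theta).

Definition pat1 (x : T) : M.-tuple Yt := map_tuple (g x) (in_tuple Theta).
Definition Aset (a : M.-tuple Yt) : set T := [set x | pat1 x = a].
Definition pm (a : M.-tuple Yt) : R := fine (P (Aset a)).
Definition patn n (xs : n.-tuple T) : n.-tuple (M.-tuple Yt) := map_tuple pat1 xs.
Definition wt n (pi : n.-tuple (M.-tuple Yt)) : R := \prod_(a <- pi) pm a.

Lemma mAset a : measurable (Aset a).
Proof.
have -> : Aset a = \bigcap_(i in [set: 'I_M])
    [set x | g x (tnth (in_tuple Theta) i) = tnth a i].
  apply/seteqP; split => x /=.
  - by move=> <- i _ /=; rewrite tnth_map.
  - move=> H; apply: eq_from_tnth => i; rewrite tnth_map; exact: H.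
apply: fin_bigcap_measurable; first exact: finite_finset.
by move=> i _; apply: mg; exact: mem_tnth.
Qed.

Lemma mfun_pat (G : M.-tuple Yt -> \bar R) (D : set T) :
  measurable_fun D (fun x => G (pat1 x)).
Proof.
move=> mD B mB.
have -> : D `&` (fun x => G (pat1 x)) @^-1` B =
    D `&` \bigcup_(a in [set a | B (G a)]) Aset a.
  apply/seteqP; split => x /= [Dx Bx]; split => //.
  - by exists (pat1 x).
  - by case: Bx => a /= Ba xa; rewrite xa.
apply: measurableI => //; apply: fin_bigcup_measurable; first exact: finite_finset.
by move=> a _; exact: mAset.
Qed.

Lemma pmE a : P (Aset a) = (pm a)%:E.
Proof. by rewrite /pm fineK// fin_num_measure//; exact: mAset. Qed.

Lemma pm_ge0 a : 0 <= pm a.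
Proof. by rewrite /pm fine_ge0. Qed.

Lemma intG (G : M.-tuple Yt -> \bar R) :
  (\int[P]_x G (pat1 x) = \sum_a G a * (pm a)%:E)%E.
Proof.
have -> : [set: T] = \big[setU/set0]_(a <- index_enum (M.-tuple Yt)) Aset a.
  apply/seteqP; split => x // _.
  rewrite -bigcup_seq; exists (pat1 x) => //=.
  by rewrite mem_index_enum.
rewrite integral_bigsetU_gen //.
- apply: eq_bigr => a _.
  transitivity (\int[P]_(x in Aset a) (cst (G a)) x)%E.
    by apply: eq_integral => x; rewrite inE /Aset /= => ->.
  rewrite integral_cst; last exact: mAset.
  by congr (_ * _)%E; exact: pmE.
- exact: mAset.
- exact: (index_enum_uniq (M.-tuple Yt)).
- apply/trivIsetP => a b _ _ ab; apply/seteqP; split => x //= [].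
  by rewrite /Aset /= => -> bx; move: ab; rewrite bx eqxx.
- exact: mfun_pat.
Qed.
End Pat.
Section Pat2.
Context d (T : measurableType d) (R : realType) (P : probability T R)
  (Th : eqType) (Theta : seq Th) (Yt : finType) (g : T -> Th -> Yt).
Hypothesis mg : forall t, t \in Theta -> forall y, measurable [set x | g x t = y].
Local Notation M := (Msz Theta).
Local Notation pat1 := (pat1 Theta g).
Local Notation patn := (patn Theta g).
Local Notation pm := (@pm _ T R P Th Theta Yt g).
Local Notation wt := (@wt _ T R P Th Theta Yt g).

Lemma wt_ge0 n (pi : n.-tuple (M.-tuple Yt)) : 0 <= wt pi.
Proof. by apply: prodr_ge0 => a _; exact: pm_ge0. Qed.

Lemma wt_cons n a (pi : n.-tuple (M.-tuple Yt)) : wt [tuple of a :: pi] = pm a * wt pi.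
Proof. by rewrite /wt /= big_cons. Qed.

Lemma iint_pat n (Phi : n.-tuple (M.-tuple Yt) -> \bar R) :
  (forall pi, Phi pi != -oo%E) ->
  iint P (fun xs => Phi (patn xs)) = (\sum_pi Phi pi * (wt pi)%:E)%E.
Proof.
elim: n Phi => [|n IH] Phi HPhi.
  rewrite /= (big_pred1 [tuple]); last by move=> pi; apply/esym/eqP; exact: tuple0.
  rewrite /wt /= big_nil mule1; congr Phi; exact: tuple0.
rewrite /=.
transitivity (\int[P]_x (\sum_(pi : n.-tuple (M.-tuple Yt))
     Phi [tuple of pat1 x :: pi] * (wt pi)%:E))%E.
  apply: eq_integral => x _.
  rewrite -(IH (fun pi => Phi [tuple of pat1 x :: pi])) //.
  by congr iint; apply: funext => s; congr Phi; apply: val_inj.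
rewrite (intG P mg (fun a => \sum_(pi : n.-tuple (M.-tuple Yt))
     Phi [tuple of a :: pi] * (wt pi)%:E)%E).
rewrite sum_tuple_cons; apply: eq_bigr => a _.
rewrite sume_distrl_c; last by move=> pi; apply: mulEc_nNy => //; exact: wt_ge0.
apply: eq_bigr => pi _.
by rewrite wt_cons -muleA -EFinM mulrC.
Qed.
End Pat2.
Section Phis.
Context d (T : measurableType d) (R : realType) (P : probability T R)
  (Th : eqType) (Theta : seq Th) (Yt : finType) (g : T -> Th -> Yt) (y0 : Yt).
Local Notation M := (Msz Theta).
Local Notation pat1 := (@pat1 _ T Th Theta Yt g).
Local Notation patn := (@patn _ T Th Theta Yt g).
Local Notation PT := (M.-tuple Yt).

Definition col n (pi : n.-tuple PT) (t : Th) : n.-tuple Yt :=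
  map_tuple (fun a : PT => nth y0 a (index t Theta)) pi.
Definition pjP n (pi : n.-tuple PT) (t : Th) (y : n.-tuple Yt) : R :=
  (M%:R)^-1 * (val y == val (col pi t))%:R.
Definition pYP n (pi : n.-tuple PT) (y : n.-tuple Yt) : R :=
  \sum_(t <- Theta) pjP pi t y.
Definition MIP n (pi : n.-tuple PT) : R :=
  \sum_(t <- Theta) \sum_(y : n.-tuple Yt)
     pjP pi t y * ln (pjP pi t y / ((M%:R)^-1 * pYP pi y)).
Definition HP n (pi : n.-tuple PT) : R :=
  \sum_(t <- Theta) \sum_(y : n.-tuple Yt)
     pjP pi t y * ln (pYP pi y / pjP pi t y).
Definition KLP n (pi : n.-tuple PT) : \bar R :=
  (\sum_(y : n.-tuple Yt) klterm (pYP pi y) (\prod_(i < n) pY P Theta g (tnth y i)))%E.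

Lemma colE n (xs : n.-tuple T) t : t \in Theta ->
  val (col (patn xs) t) = map (g ^~ t) xs.
Proof.
move=> tT; rewrite /= -map_comp; apply: eq_map => x /=.
by rewrite (nth_map t) ?index_mem // nth_index.
Qed.

Lemma pjointE n (xs : n.-tuple T) t y : t \in Theta ->
  pjoint R Theta g xs t y = pjP (patn xs) t y.
Proof. by move=> tT; rewrite /pjoint /pjP colE. Qed.

Lemma pYE n (xs : n.-tuple T) y : pYgivenX R Theta g xs y = pYP (patn xs) y.
Proof. by apply: eq_big_seq => t tT; exact: pjointE. Qed.

Lemma MIE n (xs : n.-tuple T) : MI_at R Theta g xs = MIP (patn xs).
Proof.
apply: eq_big_seq => t tT; apply: eq_bigr => y _.
by rewrite pjointE // pYE.
Qed.

Lemma HE n (xs : n.-tuple T) : Hcond_at R Theta g xs = HP (patn xs).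
Proof.
apply: eq_big_seq => t tT; apply: eq_bigr => y _.
by rewrite pjointE // pYE.
Qed.

Lemma KLE n (xs : n.-tuple T) :
  (\sum_(y : n.-tuple Yt) klterm (pYgivenX R Theta g xs y)
      (\prod_(i < n) pY P Theta g (tnth y i)))%E = KLP (patn xs).
Proof. by apply: eq_bigr => y _; rewrite pYE. Qed.

Lemma klterm_nNy (p q : R) : klterm p q != -oo%E.
Proof. by rewrite /klterm; case: ifP => //; case: ifP. Qed.

Hypothesis mg : forall t, t \in Theta -> forall y, measurable [set x | g x t = y].

Lemma condMIE n : condMI P Theta g n =
  (\sum_(pi : n.-tuple PT) MIP pi * wt P g pi)%:E.
Proof.
rewrite /condMI (_ : (fun xs => _) = (fun xs => (fun pi => (MIP pi)%:E) (patn xs))); last first.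
  by apply: funext => xs; rewrite MIE.
rewrite (iint_pat (Phi := fun pi => (MIP pi)%:E) P mg) // -sumEFin; apply: eq_bigr => pi _; by rewrite EFinM.
Qed.

Lemma condHE n : condH P Theta g n =
  (\sum_(pi : n.-tuple PT) HP pi * wt P g pi)%:E.
Proof.
rewrite /condH (_ : (fun xs => _) = (fun xs => (fun pi => (HP pi)%:E) (patn xs))); last first.
  by apply: funext => xs; rewrite HE.
rewrite (iint_pat (Phi := fun pi => (HP pi)%:E) P mg) // -sumEFin; apply: eq_bigr => pi _; by rewrite EFinM.
Qed.

Lemma KLnE n : KLn P Theta g n =
  (\sum_(pi : n.-tuple PT) KLP pi * (wt P g pi)%:E)%E.
Proof.
rewrite /KLn (_ : (fun xs => _) = (fun xs => KLP (patn xs))); last first.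
  by apply: funext => xs; rewrite KLE.
rewrite (iint_pat (Phi := @KLP n) P mg) // => pi; apply: sum_nNy => y; exact: klterm_nNy.
Qed.
End Phis.
Section Ident.
Context d (T : measurableType d) (R : realType) (P : probability T R)
  (Th : eqType) (Theta : seq Th) (Yt : finType) (g : T -> Th -> Yt) (y0 : Yt).
Hypothesis mg : forall t, t \in Theta -> forall y, measurable [set x | g x t = y].
Local Notation M := (Msz Theta).
Local Notation pat1 := (@pat1 _ T Th Theta Yt g).
Local Notation PT := (M.-tuple Yt).
Local Notation pm := (@pm _ T R P Th Theta Yt g).
Local Notation wt := (@wt _ T R P Th Theta Yt g).

Lemma sum_pm : \sum_(a : PT) pm a = 1.
Proof.
apply: EFin_inj; rewrite -sumEFin.
have := intG P mg (fun _ => 1%E).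
under eq_bigr do rewrite mul1e.
move=> <-; rewrite integral_cst //= mul1e; exact: probability_setT.
Qed.

Lemma pat1_nth x t : t \in Theta -> nth y0 (pat1 x) (index t Theta) = g x t.
Proof. by move=> tT; rewrite /= (nth_map t) ?index_mem // nth_index. Qed.

Lemma sum_pm_marg t y : t \in Theta ->
  \sum_(a : PT) (nth y0 a (index t Theta) == y)%:R * pm a =
  fine (P [set x | g x t = y]).
Proof.
move=> tT; apply: EFin_inj; rewrite -sumEFin.
have := intG P mg (fun a => ((nth y0 a (index t Theta) == y)%:R)%:E).
under eq_bigr do rewrite -EFinM.
move=> <-; rewrite fineK ?fin_num_measure //; last exact: mg.
transitivity (\int[P]_x (\1_[set x | g x t = y] x)%:E)%E.
  apply: eq_integral => x _; rewrite indicE pat1_nth //.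
  have [e|ne] := eqVneq (g x t) y.
    by rewrite mem_set.
  by rewrite memNset //= => e; rewrite e eqxx in ne.
by rewrite integral_indic ?setIT //; exact: mg.
Qed.

Lemma sum_wt n : \sum_(pi : n.-tuple PT) wt pi = 1.
Proof.
elim: n => [|n IH].
  rewrite (big_pred1 [tuple]); last by move=> pi; apply/esym/eqP; exact: tuple0.
  by rewrite /wt big_nil.
rewrite sum_tuple_cons -[RHS]sum_pm; apply: eq_bigr => a _.
under eq_bigr do rewrite wt_cons.
by rewrite -big_distrr /= IH mulr1.
Qed.

Lemma sum_wt_add n (h : PT -> R) :
  \sum_(pi : n.-tuple PT) wt pi * \sum_(a <- pi) h a = n%:R * \sum_(a : PT) pm a * h a.
Proof.
elim: n => [|n IH].
  rewrite mul0r big1 // => pi _.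
  by case: pi => [[|? ?] //] ?; rewrite big_nil mulr0.
rewrite sum_tuple_cons.
transitivity (\sum_(a : PT) (pm a * h a + pm a * (n%:R * \sum_(b : PT) pm b * h b))).
  apply: eq_bigr => a _.
  under eq_bigr do rewrite wt_cons /= big_cons.
  transitivity (\sum_(pi : n.-tuple PT) (pm a * h a * wt pi + pm a * (wt pi * \sum_(b <- pi) h b))).
    by apply: eq_bigr => pi _; ring.
  by rewrite big_split /= -!big_distrr /= sum_wt IH mulr1.
by rewrite big_split /= -big_distrl /= sum_pm mulrS; ring.
Qed.
End Ident.
Section Pointwise.
Context d (T : measurableType d) (R : realType) (P : probability T R)
  (Th : eqType) (Theta : seq Th) (Yt : finType) (g : T -> Th -> Yt) (y0 : Yt).
Hypothesis mg : forall t, t \in Theta -> forall y, measurable [set x | g x t = y].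
Local Notation M := (Msz Theta).
Local Notation PT := (M.-tuple Yt).
Local Notation pm := (@pm _ T R P Th Theta Yt g).
Local Notation wt := (@wt _ T R P Th Theta Yt g).
Local Notation col := (@col Th Theta Yt y0 _).
Local Notation pjP := (@pjP R Th Theta Yt y0 _).
Local Notation pYP := (@pYP R Th Theta Yt y0 _).
Local Notation pYY := (pY P Theta g).

Lemma M_gt0 t : t \in Theta -> (0 < M)%N.
Proof. by case: Theta => //. Qed.

Lemma invM_gt0 t : t \in Theta -> 0 < (M%:R : R)^-1.
Proof. by move=> tT; rewrite invr_gt0 ltr0n (M_gt0 tT). Qed.

Lemma pjP_ge0 n (pi : n.-tuple PT) t y : 0 <= pjP pi t y.
Proof. by rewrite /pjP mulr_ge0 // invr_ge0. Qed.

Lemma pYP_ge0 n (pi : n.-tuple PT) y : 0 <= pYP pi y.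
Proof. by apply: sumr_ge0 => t _; exact: pjP_ge0. Qed.

Lemma pY_ge0 y : 0 <= pYY y.
Proof.
apply: sumr_ge0 => t _; apply: mulr_ge0; first by rewrite invr_ge0.
exact: fine_ge0.
Qed.

Lemma sum_pjP n (pi : n.-tuple PT) t (f : R -> n.-tuple Yt -> R) :
  \sum_(y : n.-tuple Yt) pjP pi t y * f (pjP pi t y) y =
  (M%:R)^-1 * f ((M%:R)^-1) (col pi t).
Proof.
rewrite (bigD1 (col pi t)) //= big1 ?addr0.
  by rewrite /pjP eqxx mulr1.
by move=> y /negbTE yc; rewrite /pjP val_eqE yc mulr0 mul0r.
Qed.

Lemma sum_pYP n (pi : n.-tuple PT) (h : n.-tuple Yt -> R) :
  \sum_(y : n.-tuple Yt) pYP pi y * h y =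
  \sum_(t <- Theta) (M%:R)^-1 * h (col pi t).
Proof.
under eq_bigr do rewrite /pYP big_distrl.
rewrite exchange_big; apply: eq_bigr => t _.
exact: (sum_pjP pi t (fun _ y => h y)).
Qed.

Lemma pYP_col_gt0 n (pi : n.-tuple PT) t : t \in Theta -> 0 < pYP pi (col pi t).
Proof.
move=> tT; rewrite /pYP (big_rem t tT) /= /pjP eqxx mulr1.
have h1 := invM_gt0 tT.
have h2 : 0 <= \sum_(y <- rem t Theta) pjP pi y (col pi t).
  by apply: sumr_ge0 => *; exact: pjP_ge0.
rewrite /pjP in h2; lra.
Qed.

Lemma HP_MIP n (pi : n.-tuple PT) : @HP R Th Theta Yt y0 _ pi + @MIP R Th Theta Yt y0 _ pi = Htheta R Theta.
Proof.
rewrite /HP /MIP -big_split /Htheta -sumrN; apply: eq_big_seq => t tT.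
rewrite -big_split /=.
under eq_bigr do rewrite -mulrDr.
rewrite (sum_pjP pi t (fun p y => ln (pYP pi y / p) + ln (p / ((M%:R)^-1 * pYP pi y)))).
have m0 := invM_gt0 tT; have p0 := pYP_col_gt0 pi tT.
set m := (M%:R : R)^-1 in m0 *; set p := pYP pi (col pi t) in p0 *.
have -> : m / (m * p) = p^-1 by field; apply/andP; split; rewrite gt_eqF.
have h1 : ln p^-1 = - ln p by rewrite -(@lnV R p) //.
have h2 : ln m^-1 = - ln m by rewrite -(@lnV R m) //.
have h3 : ln (p / m) = ln p + ln m^-1.
  rewrite -(@lnM R p m^-1) //. rewrite posrE invr_gt0. exact: m0.
rewrite h3 h2 h1; ring.
Qed.
End Pointwise.
Section Pointwise2.
Context d (T : measurableType d) (R : realType) (P : probability T R)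
  (Th : eqType) (Theta : seq Th) (Yt : finType) (g : T -> Th -> Yt) (y0 : Yt).
Hypothesis mg : forall t, t \in Theta -> forall y, measurable [set x | g x t = y].
Local Notation M := (Msz Theta).
Local Notation PT := (M.-tuple Yt).
Local Notation pm := (@pm _ T R P Th Theta Yt g).
Local Notation wt := (@wt _ T R P Th Theta Yt g).
Local Notation col := (@col Th Theta Yt y0 _).
Local Notation pjP := (@pjP R Th Theta Yt y0 _).
Local Notation pYP := (@pYP R Th Theta Yt y0 _).
Local Notation pYY := (pY P Theta g).

Definition qY n (y : n.-tuple Yt) : R := \prod_(i < n) pYY (tnth y i).

Definition KLr n (pi : n.-tuple PT) : R :=
  \sum_(y : n.-tuple Yt)
    (if pYP pi y == 0 then 0 else pYP pi y * ln (pYP pi y / qY y)).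

Definition good n (pi : n.-tuple PT) := forall t, t \in Theta -> qY (col pi t) != 0.

Lemma KLP_r n (pi : n.-tuple PT) : good pi -> @KLP _ T R P Th Theta Yt g y0 n pi = (KLr pi)%:E.
Proof.
move=> gd; rewrite /KLP /KLr -sumEFin; apply: eq_bigr => y _; rewrite /klterm.
have [p0|p0] := eqVneq (pYP pi y) 0 => //.
case: (boolP (has (fun t => y == col pi t) Theta)) => [/hasP [t tT /eqP yc]|/hasPn H].
  by move: (gd t tT); rewrite -yc /qY => /negbTE ->.
move: p0; rewrite /pYP big_seq big1 ?eqxx // => t tT.
by rewrite /pjP val_eqE (negbTE (H t tT)) mulr0.
Qed.

Lemma good_of_wt n (pi : n.-tuple PT) : wt pi != 0 -> good pi.
Proof.
move=> w0 t tT; apply/negP => /eqP /eqP /prodf_eq0 [i _ /eqP pY0].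
rewrite tnth_map in pY0.
set a := tnth pi i in pY0; set y := nth y0 a (index t Theta) in pY0.
have hP : fine (P [set x | g x t = y]) = 0.
  move: pY0; rewrite /pY (big_rem t tT) /=.
  have h1 : 0 <= \sum_(t' <- rem t Theta) (M%:R)^-1 * fine (P [set x | g x t' = y]).
    apply: sumr_ge0 => t' _; apply: mulr_ge0; first by rewrite invr_ge0.
    exact: fine_ge0.
  have h2 : 0 <= (M%:R : R)^-1 * fine (P [set x | g x t = y]).
    by apply: mulr_ge0; [rewrite invr_ge0|exact: fine_ge0].
  move=> h3; have : (M%:R : R)^-1 * fine (P [set x | g x t = y]) = 0 by lra.
  move/eqP; rewrite mulf_eq0 invr_eq0 pnatr_eq0 => /orP [/eqP M0|/eqP //].
  by move: (M_gt0 tT); rewrite M0.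
have := sum_pm_marg P y0 mg y tT; rewrite hP => /psumr_eq0P H.
have pa : pm a = 0.
  have Hnn : forall b : PT, true -> 0 <= (nth y0 b (index t Theta) == y)%:R * pm b.
    by move=> b _; apply: mulr_ge0 => //; exact: pm_ge0.
  by have := H Hnn a isT; rewrite -/y eqxx mul1r.
move: w0; rewrite /wt prodf_seq_eq0 => /negP; apply; apply/hasP; exists a.
  exact: mem_tnth.
by rewrite pa eqxx.
Qed.

Lemma ln_prod (s : seq PT) (F : PT -> R) : (forall a, a \in s -> 0 < F a) ->
  ln (\prod_(a <- s) F a) = \sum_(a <- s) ln (F a).
Proof.
elim: s => [|a s IH] H; first by rewrite !big_nil ln1.
rewrite !big_cons -IH; last by move=> b bs; apply: H; rewrite inE bs orbT.
rewrite -(@lnM R (F a) (\prod_(j <- s) F j)) //.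
  by rewrite posrE; apply: H; rewrite inE eqxx.
rewrite posrE big_seq; apply: prodr_gt0 => b bs; apply: H.
by rewrite inE bs orbT.
Qed.

Definition Fp n (pi : n.-tuple PT) : R :=
  \sum_(t <- Theta) (M%:R)^-1 * \sum_(a <- pi) ln (pYY (nth y0 a (index t Theta))).

Lemma MIP_KLr n (pi : n.-tuple PT) : good pi ->
  @MIP R Th Theta Yt y0 _ pi + KLr pi = - Fp pi.
Proof.
move=> gd; rewrite /KLr.
have -> : \sum_(y : n.-tuple Yt)
    (if pYP pi y == 0 then 0 else pYP pi y * ln (pYP pi y / qY y)) =
    \sum_(y : n.-tuple Yt) pYP pi y *
      (if pYP pi y == 0 then 0 else ln (pYP pi y / qY y)).
  by apply: eq_bigr => y _; case: ifP; rewrite ?mulr0.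
rewrite sum_pYP /MIP /Fp -sumrN -big_split; apply: eq_big_seq => t tT /=.
rewrite (sum_pjP y0 pi t (fun p y => ln (p / ((M%:R)^-1 * pYP pi y)))) /=.
have m0 := invM_gt0 R tT; have p0 := pYP_col_gt0 R y0 pi tT.
rewrite (gt_eqF p0).
have qE : qY (col pi t) = \prod_(a <- pi) pYY (nth y0 a (index t Theta)).
  by rewrite big_tuple /qY; apply: eq_bigr => i _; rewrite tnth_map.
have q0 : 0 < qY (col pi t).
  rewrite lt0r (gd t tT) /=; apply: prodr_ge0 => i _; exact: pY_ge0.
have lq : ln (qY (col pi t)) = \sum_(a <- pi) ln (pYY (nth y0 a (index t Theta))).
  rewrite qE ln_prod // => a api.
  rewrite lt0r pY_ge0 andbT; apply/negP => /eqP a0.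
  move: (gd t tT); rewrite qE prodf_seq_eq0 => /negP; apply; apply/hasP.
  by exists a => //; rewrite a0 eqxx.
rewrite -lq.
set m := (M%:R : R)^-1 in m0 *; set p := pYP pi (col pi t) in p0 *.
set q := qY (col pi t) in q0 *.
have -> : m / (m * p) = p^-1 by field; apply/andP; split; rewrite gt_eqF.
have h1 : ln p^-1 = - ln p by rewrite -(@lnV R p) //.
have h2 : ln q^-1 = - ln q by rewrite -(@lnV R q) //.
have h3 : ln (p / q) = ln p + ln q^-1.
  rewrite -(@lnM R p q^-1) //. rewrite posrE invr_gt0. exact: q0.
rewrite h3 h2 h1; ring.
Qed.

Lemma marg_sum t (h : Yt -> R) : t \in Theta ->
  \sum_(a : PT) pm a * h (nth y0 a (index t Theta)) =
  \sum_(y : Yt) fine (P [set x | g x t = y]) * h y.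
Proof.
move=> tT; apply/esym.
under eq_bigr => y _ do rewrite -(sum_pm_marg P y0 mg y tT) big_distrl.
rewrite exchange_big; apply: eq_bigr => a _ /=.
rewrite (bigD1 (nth y0 a (index t Theta))) //= eqxx mul1r big1 ?addr0 // => y ne.
by rewrite eq_sym (negbTE ne) !mul0r.
Qed.

Lemma part1_real n :
  \sum_(pi : n.-tuple PT) (@MIP R Th Theta Yt y0 _ pi + KLr pi) * wt pi =
  n%:R * HY P Theta g.
Proof.
transitivity (\sum_(pi : n.-tuple PT) - (wt pi * Fp pi)).
  apply: eq_bigr => pi _; have [->|w0] := eqVneq (wt pi) 0.
    by rewrite mulr0 mul0r oppr0.
  by rewrite MIP_KLr; [ring|exact: good_of_wt].
rewrite sumrN /HY mulrN; congr (- _).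
under eq_bigr do rewrite /Fp big_distrr /=.
rewrite exchange_big /=.
transitivity (\sum_(t <- Theta) (M%:R)^-1 * (n%:R *
   \sum_(y : Yt) fine (P [set x | g x t = y]) * ln (pYY y))).
  apply: eq_big_seq => t tT.
  rewrite -marg_sum // -(sum_wt_add P mg n) big_distrr /=.
  by apply: eq_bigr => pi _; ring.
transitivity (n%:R * \sum_(t <- Theta) (M%:R)^-1 *
   \sum_(y : Yt) fine (P [set x | g x t = y]) * ln (pYY y)).
  rewrite mulr_sumr; apply: eq_bigr => t _; ring.
congr (_ * _).
transitivity (\sum_(t <- Theta) \sum_(y : Yt)
   (M%:R)^-1 * (fine (P [set x | g x t = y]) * ln (pYY y))).
  by apply: eq_bigr => t _; rewrite mulr_sumr.
rewrite exchange_big /=; apply: eq_bigr => y _.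
by rewrite /pY big_distrl /=; apply: eq_bigr => t _; ring.
Qed.
End Pointwise2.
Section AllReal.
Context d (T : measurableType d) (R : realType) (P : probability T R)
  (Th : eqType) (Theta : seq Th) (Yt : finType) (g : T -> Th -> Yt) (y0 : Yt).
Hypothesis mg : forall t, t \in Theta -> forall y, measurable [set x | g x t = y].
Local Notation M := (Msz Theta).
Local Notation PT := (M.-tuple Yt).
Local Notation wt := (@wt _ T R P Th Theta Yt g).

Lemma all_real n : let I := \sum_(pi : n.-tuple PT) @MIP R Th Theta Yt y0 _ pi * wt pi in
  [/\ condMI P Theta g n = I%:E,
      condH P Theta g n = (Htheta R Theta - I)%:E &
      KLn P Theta g n = (n%:R * HY P Theta g - I)%:E].
Proof.
move=> I; split.
- exact: (condMIE P y0 mg n).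
- rewrite (condHE P y0 mg n); congr EFin.
  rewrite /I -[Htheta R Theta]mulr1 -(sum_wt P mg n) mulr_sumr -sumrB.
  apply: eq_bigr => pi _; rewrite -(HP_MIP R y0 pi); ring.
- rewrite (KLnE P y0 mg n).
  have -> : (\sum_(pi : n.-tuple PT) KLP P g y0 pi * (wt pi)%:E)%E =
      (\sum_(pi : n.-tuple PT) KLr P g y0 pi * wt pi)%:E.
    rewrite -sumEFin; apply: eq_bigr => pi _.
    have [->|w0] := eqVneq (wt pi) 0; first by rewrite mule0 mulr0.
    by rewrite KLP_r ?EFinM //; exact: (good_of_wt y0 mg w0).
  congr EFin; rewrite -(part1_real P y0 mg n) /I -sumrB.
  by apply: eq_bigr => pi _; ring.
Qed.
End AllReal.
Lemma sum_const_seq (R : realType) (I : Type) (s : seq I) (c : R) :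
  \sum_(i <- s) c = (size s)%:R * c.
Proof.
elim: s => [|a s IH]; first by rewrite big_nil mul0r.
by rewrite big_cons IH /= mulrS mulrDl mul1r.
Qed.

Lemma Htheta_ln (R : realType) (Th : eqType) (Theta : seq Th) :
  (0 < size Theta)%N -> Htheta R Theta = ln (size Theta)%:R.
Proof.
move=> M0; rewrite /Htheta sum_const_seq /Msz mulrA mulfV ?mul1r; last first.
  by rewrite pnatr_eq0 -lt0n.
have h : ln (size Theta)%:R^-1 = - ln (size Theta)%:R :> R.
  by rewrite -(@lnV R (size Theta)%:R) // posrE ltr0n.
by rewrite h opprK.
Qed.

Section HYb.
Context d (T : measurableType d) (R : realType) (P : probability T R)
  (Th : eqType) (Theta : seq Th) (Yt : finType) (g : T -> Th -> Yt).
Hypothesis mg : forall t, t \in Theta -> forall y, measurable [set x | g x t = y].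

Lemma pY_le1 y : pY P Theta g y <= 1.
Proof.
apply: (@le_trans _ _ (\sum_(t <- Theta) (Msz Theta)%:R^-1)).
  rewrite [X in X <= _]big_seq [X in _ <= X]big_seq; apply: ler_sum => t tT.
  rewrite ler_piMr ?invr_ge0 //.
  have h := probability_le1 P (mg tT y).
  have hf : P [set x | g x t = y] \is a fin_num by rewrite fin_num_measure //; exact: mg.
  by rewrite -lee_fin fineK.
rewrite sum_const_seq /Msz; have [->|s0] := eqVneq (size Theta) 0%N.
  by rewrite mul0r.
by rewrite mulfV // pnatr_eq0.
Qed.

Lemma HY_bounds : 0 <= HY P Theta g <= #|Yt|%:R.
Proof.
have key y : 0 <= - (pY P Theta g y * ln (pY P Theta g y)) <= 1.
  have p0 := pY_ge0 P Theta g y; have p1 := pY_le1 y.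
  set p := pY P Theta g y in p0 p1 *.
  have [->|pn0] := eqVneq p 0; first by rewrite mul0r oppr0 lexx ler01.
  have pp : 0 < p by rewrite lt0r pn0.
  apply/andP; split.
    by rewrite oppr_ge0 mulr_ge0_le0 // ln_le0.
  have pi0 : 0 < p^-1 by rewrite invr_gt0.
  have h := ln_sublinear pi0.
  have e : ln p^-1 = - ln p by rewrite -(@lnV R p) // posrE.
  rewrite e in h.
  have : p * (- ln p) <= p * p^-1 by rewrite ler_pM2l //; exact: ltW.
  by rewrite mulfV // mulrN.
rewrite /HY -sumrN; apply/andP; split.
  by apply: sumr_ge0 => y _; case/andP: (key y).
rewrite -sumr_const; apply: ler_sum => y _; by case/andP: (key y).
Qed.
End HYb.
Unset Implicit Arguments.
Theorem proposition3 (R : realType) (Yt : finType)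
  (L n : nat -> nat)
  (Theta : forall N : nat, seq (N.-tuple R))
  (D : forall N : nat, probability ((L N).-tuple R) R)
  (g : forall N : nat, (L N).-tuple R -> N.-tuple R -> Yt) :
  (forall N, uniq (Theta N)) ->
  (forall N, forall t, t \in Theta N -> inner t t = 1) ->
  (forall N, forall t t', t \in Theta N -> t' \in Theta N -> 0 <= inner t t') ->
  (forall m : nat, \forall N \near \oo, (m <= size (Theta N))%N) ->
  (forall N, forall t, t \in Theta N -> forall y : Yt,
      measurable [set x | g N x t = y]) ->
  (forall N,
     condMI (D N) (Theta N) (g N) (n N)
     = ((n N)%:R * HY (D N) (Theta N) (g N))%:E - KLn (D N) (Theta N) (g N) (n N))%E
  /\
  (exists eps : nat -> R, eps @ \oo --> 0 /\
     \forall N \near \oo,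
       ((1%:E - condH (D N) (Theta N) (g N) (n N) * ((Htheta R (Theta N))^-1)%:E)
        + KLn (D N) (Theta N) (g N) (n N) * ((Htheta R (Theta N))^-1)%:E
        = ((1 + eps N) * ((n N)%:R / (nstar (D N) (Theta N) (g N))%:~R))%:E)%E).
Proof.
move=> _ _ _ Hsize Hmeas.
pose y0 N : Yt := g N (nseq_tuple (L N) 0) (nseq_tuple N 0).
have AR N := all_real (D N) (y0 N) (@Hmeas N) (n N).
split.
  move=> N; case: (AR N) => /= -> _ ->; rewrite -EFinB; congr EFin; ring.
pose K : R := #|Yt|%:R.
have K0 : 0 < K by rewrite /K ltr0n; apply/card_gt0P; exists (y0 0%N).
have ev c : 0 < c -> \forall N \near \oo, c <= Htheta R (Theta N).
  move=> c0; apply: filterS (Hsize (Num.trunc (expR c)).+1) => N HN.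
  have Mpos : (0 < size (Theta N))%N by apply: leq_trans HN.
  rewrite Htheta_ln //.
  have h1 := truncnS_gt (expR c).
  have h2 : expR c <= (size (Theta N))%:R.
    apply: (le_trans (ltW h1)); by rewrite ler_nat.
  rewrite -{1}(expRK c) ler_ln //; rewrite posrE ?expR_gt0 // ltr0n //.
pose HYN N := HY (D N) (Theta N) (g N).
pose HtN N := Htheta R (Theta N).
pose sN N : R := (nstar (D N) (Theta N) (g N))%:~R.
have HYb N : 0 <= HYN N <= K := HY_bounds (D N) (@Hmeas N).
pose eps N := if HYN N == 0 then 0 else HYN N * sN N / HtN N - 1.
have sbounds N : 0 < HYN N -> 0 < HtN N ->
    sN N * HYN N <= HtN N /\ HtN N - HYN N < sN N * HYN N.
  move=> h0 t0; rewrite /sN /nstar; split.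
    by rewrite -ler_pdivlMr // floor_le_tmp.
  have := lt_succ_floor (Htheta R (Theta N) / HY (D N) (Theta N) (g N)).
  rewrite intrD ltr_pdivrMr // => h.
  rewrite -/(HYN N) -/(HtN N); move: h; rewrite -/(HYN N) -/(HtN N); lra.
exists eps; split.
  apply/cvgrPdist_le => e e0.
  apply: filterS (ev (K / e + K) _) => [N HtK|]; last first.
    by apply: addr_gt0 => //; exact: divr_gt0.
  rewrite sub0r normrN /eps; case: eqP => [_|H0]; first by rewrite normr0 ltW.
  have [h0 h1] := andP (HYb N).
  have hp : 0 < HYN N by rewrite lt0r; apply/andP; split => //; apply/eqP.
  have Kt : K / e <= HtN N by move: HtK; rewrite -/(HtN N); have := K0; lra.
  have t0 : 0 < HtN N by move: HtK; rewrite -/(HtN N); have := divr_gt0 K0 e0; lra.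
  have [b1 b2] := sbounds N hp t0.
  have Ke : K <= e * HtN N by move: Kt; rewrite ler_pdivrMr // mulrC.
  rewrite ler_norml; apply/andP; split.
    rewrite lerBrDr ler_pdivlMr // ; lra.
  rewrite lerBlDr ler_pdivrMr //; lra.
apply: filterS (ev K K0) => N HtK.
case: (AR N) => /= _ -> ->.
rewrite -!EFinM -EFinB -EFinD; congr EFin.
have t0 : 0 < HtN N by rewrite /HtN; lra.
rewrite -/(HtN N) -/(HYN N) -/(sN N) /eps.
case: eqP => [H0|H0].
  rewrite /sN /nstar -/(HYN N) H0 invr0 !mulr0 floor0 invr0 mulr0.
  by field; rewrite gt_eqF.
have [h0 h1] := andP (HYb N).
have hp : 0 < HYN N by rewrite lt0r; apply/andP; split => //; apply/eqP.
have [b1 b2] := sbounds N hp t0.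
have s0 : 0 < sN N.
  rewrite /sN /nstar ltr0z floor_gt0.
  by rewrite ler_pdivlMr // mul1r; rewrite -/(HYN N); lra.
by field; rewrite !gt_eqF.
Qed.
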